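(* Let $p\ge 2$, let $F$ be a distribution on $\mathbb{R}^p$, let $X\sim F$, let $X_1,X_2,\ldots$ be independent random vectors with distribution $F$, let $t\in\mathbb{R}^p$, and let $(t_n)_{n\in\mathbb{N}}$ be a sequence of random $p$-vectors (defined on the same probability space as the $X_i$). Suppose that $E|t_n-t|^4=O(n^{-2})$ as $n\to\infty$ and $E|X-t|^{-3/2}<\infty$. Let $n^*=\#\{1\le i\le n : X_i\neq t_n\}$. Then $(n-n^* )/\sqrt{n}\to 0$ in probability as $n\to\infty$.
   Context: $|\cdot|$ denotes the Euclidean norm on $\mathbb{R}^p$. *)

(* Defs.v *)
(* R^p is modelled as p.-tuple R, whose canonical
   measurable structure (measurable_structure.v) is the sigma-algebra generated
   by the coordinate projections, i.e. the Borel sigma-algebra of R^p. *)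
From HB Require Import structures.
From mathcomp Require Import all_boot all_order all_algebra.
From mathcomp Require Import all_classical all_reals all_analysis.
Set Implicit Arguments. Unset Strict Implicit. Unset Printing Implicit Defensive.
Import Order.TTheory GRing.Theory Num.Def Num.Theory.
Import numFieldNormedType.Exports.
Local Open Scope classical_set_scope.
Local Open Scope ring_scope.

Definition eucl_dist (R : realType) (p : nat) (x y : p.-tuple R) : R :=
  Num.sqrt (\sum_(i < p) (tnth x i - tnth y i) ^+ 2).

Definition inv_pow32 (R : realType) (r : R) : \bar R :=
  if r == 0 then +oo%E else (r `^ (- (3 / 2)))%:E.

Definition mutually_independent d d' (T : measurableType d)
  (T' : measurableType d') (R : realType) (P : probability T R)
  (X : nat -> T -> T') : Prop :=
  forall (s : seq nat) (B : nat -> set T'),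
    uniq s -> (forall i, i \in s -> measurable (B i)) ->
    P (\bigcap_(i in [set` s]) (X i @^-1` B i)) =
    (\prod_(i <- s) P (X i @^-1` B i))%E.

(* number of indices 0 <= i < n with X i w <> tn w  (X i stands for X_(i+1)) *)
Definition nstar (T : Type) (R : realType) (p : nat)
  (X : nat -> T -> p.-tuple R) (tn : T -> p.-tuple R) (n : nat) (w : T) : nat :=
  \sum_(i < n) (X i w != tn w).

(* Main.v *)
Require Import Defs.
From HB Require Import structures.
From mathcomp Require Import all_boot all_order all_algebra.
From mathcomp Require Import all_classical all_reals all_analysis.
From mathcomp Require Import measurable_realfun ring lra.
Import Order.TTheory GRing.Theory Num.Def Num.Theory.
Import numFieldNormedType.Exports.
Set Implicit Arguments. Unset Strict Implicit. Unset Printing Implicit Defensive.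
Local Open Scope classical_set_scope.
Local Open Scope ring_scope.

Lemma mdist d (T : measurableType d) (R : realType) (p : nat)
  (f g : T -> p.-tuple R) :
  measurable_fun setT f -> measurable_fun setT g ->
  measurable_fun setT (fun w => eucl_dist (f w) (g w)).
Proof.
move=> mf mg; rewrite /eucl_dist.
apply: measurableT_comp.
  exact: continuous_measurable_fun (@sqrt_continuous R).
apply: measurable_sum => j; apply: measurable_funX.
apply: measurable_funB.
  exact: ((measurable_fun_tnthP f).1 mf j).
exact: ((measurable_fun_tnthP g).1 mg j).
Qed.

Lemma meq d (T : measurableType d) (R : realType) (p : nat)
  (f g : T -> p.-tuple R) :
  measurable_fun setT f -> measurable_fun setT g ->
  measurable [set w | f w = g w].
Proof.
move=> mf mg.
have -> : [set w | f w = g w] =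
   \bigcap_(j in [set: 'I_p]) [set w | tnth (f w) j == tnth (g w) j].
  apply/seteqP; split => w /=.
    by move=> E j _ /=; rewrite E.
  by move=> H; apply/eqP; rewrite eqEtuple; apply/forallP => j; exact: H.
apply: fin_bigcap_measurable; first exact: finite_finset.
move=> j _.
have := measurable_fun_eqr
  ((measurable_fun_tnthP f).1 mf j) ((measurable_fun_tnthP g).1 mg j).
move=> /(_ measurableT [set true]) /=; rewrite setTI.
by apply => //.
Qed.

Lemma mbool d (T : measurableType d) (f : T -> bool) :
  measurable_fun setT f -> measurable [set w | f w].
Proof.
move=> mf; have := mf measurableT [set true] I; rewrite setTI.
by congr measurable; apply/seteqP; split => w /=.
Qed.

Lemma minv (R : realType) : measurable_fun setT (@inv_pow32 R).
Proof.
rewrite /inv_pow32; apply: measurable_fun_ifT.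
- exact: measurable_fun_eqr.
- exact: measurable_cst.
- apply: measurableT_comp => //; exact: measurable_powR.
Qed.

Lemma inv_pow32_ge0 (R : realType) (r : R) : (0 <= inv_pow32 r)%E.
Proof. by rewrite /inv_pow32; case: ifP => // _; rewrite lee_fin powR_ge0. Qed.

Lemma probE d (T : measurableType d) (R : realType) (P : probability T R)
  (A : set T) : measurable A -> P A = (fine (P A))%:E.
Proof.
move=> mA; rewrite fineK // ge0_fin_numE ?measure_ge0 //.
by apply: (le_lt_trans (probability_le1 P mA)); rewrite ltey.
Qed.

Lemma count_eq (T : eqType) (a : nat -> T) (b : T) n :
  (n - \sum_(i < n) ((a i != b) : nat))%N = (\sum_(i < n) ((a i == b) : nat))%N.
Proof.
have : (\sum_(i < n) ((a i == b) : nat) + \sum_(i < n) ((a i != b) : nat))%N = n.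
  rewrite -big_split /= (eq_bigr (fun=> 1%N)); last by move=> i _; case: (a i == b).
  by rewrite sum_nat_const card_ord muln1.
by move=> E; rewrite -{1}E addnK.
Qed.

Lemma pow32_bound (R : realType) (r u : R) : 0 < u -> 0 < r ->
  r <= (u ^+ 4)^-1 -> u ^+ 6 <= r `^ (- (3 / 2)).
Proof.
move=> u0 r0 ru.
have e : r `^ (3 / 2) = Num.sqrt (r ^+ 3).
  by rewrite powRrM powR_mulrn ?ltW // powR12_sqrt // exprn_ge0 // ltW.
rewrite powRN e.
have s0 : 0 < Num.sqrt (r ^+ 3) by rewrite sqrtr_gt0 exprn_gt0.
rewrite -[u ^+ 6]invrK lef_pV2 ?posrE ?invr_gt0 ?exprn_gt0 //.
have -> : (u ^+ 6)^-1 = Num.sqrt (((u ^+ 4)^-1) ^+ 3).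
  rewrite -[(u ^+ 6)^-1]ger0_norm ?invr_ge0 ?exprn_ge0 ?ltW //.
  rewrite -sqrtr_sqr; congr Num.sqrt.
  by rewrite -!exprVn -!exprM.
rewrite ler_sqrt; last by rewrite exprn_ge0 // invr_ge0 exprn_ge0 // ltW.
by apply: lerXn2r => //; rewrite nnegrE ?invr_ge0 ?exprn_ge0 // ltW.
Qed.

Lemma key d (T : measurableType d) (R : realType) (P : probability T R) (p : nat)
  (F : probability (p.-tuple R) R)
  (X : nat -> T -> p.-tuple R) (mX : forall i, measurable_fun setT (X i))
  (t : p.-tuple R) (tn : T -> p.-tuple R) (mtn : measurable_fun setT tn)
  (hdist : forall i (A : set (p.-tuple R)), measurable A -> P (X i @^-1` A) = F A)
  (n : nat) (n0 : (0 < n)%N) (C K eps : R) (eps0 : 0 < eps)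
  (hC : (\int[P]_w ((eucl_dist (tn w) t) ^+ 4)%:E <= (C / (n%:R ^+ 2))%:E)%E)
  (hK : (\int[F]_x inv_pow32 (eucl_dist x t) = K%:E)%E) :
  (P [set w | (eps < `| ((n - nstar X tn n w)%N%:R / Num.sqrt n%:R) : R |)%R]
   <= (C / (n%:R `^ (10^-1)) ^+ 4 + K / (eps * n%:R `^ (10^-1)))%:E)%E.
Proof.
set u := n%:R `^ (10^-1).
have u0 : 0 < u by apply: powR_gt0; rewrite ltr0n.
have u10 : u ^+ 10 = n%:R.
  by rewrite /u -powR_mulrn ?powR_ge0// -powRrM mulVf ?powRr1 ?ler0n.
have sqn : Num.sqrt n%:R = u ^+ 5.
  rewrite -u10 (_ : 10%N = (5 * 2)%N)// exprM sqrtr_sqr ger0_norm //.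
  by rewrite exprn_ge0 // ltW.
pose D w := eucl_dist (tn w) t.
have mD : measurable_fun setT D := mdist mtn (measurable_cst t).
pose g x := inv_pow32 (eucl_dist x t).
have mg : measurable_fun setT g :=
  measurableT_comp (@minv R) (mdist (@measurable_id _ _ setT) (measurable_cst t)).
pose G := setT `&` [set x | ((u ^+ 6)%:E <= `| g x |)%E].
have mG : measurable G.
  apply: emeasurable_fun_c_infty => //.
  by apply: measurableT_comp mg; exact: abse_measurable.
have mXG i : measurable (X i @^-1` G).
  by rewrite -[Y in measurable Y]setTI; exact: mX.
pose Nf w : R := \sum_(i < n) \1_(X i @^-1` G) w.
have mNf : measurable_fun setT Nf.
  by apply: measurable_sum => i; exact: measurable_indic.
pose c w : R := \sum_(i < n) \1_[set w | X i w = tn w] w.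
have mc : measurable_fun setT c.
  by apply: measurable_sum => i; apply: measurable_indic; exact: meq.
have cE w : (n - nstar X tn n w)%N%:R = c w.
  rewrite /nstar (count_eq (fun i => X i w)) natr_sum; apply: eq_bigr => i _; rewrite indicE.
  by case: eqP => [E|ne]; [rewrite mem_set|rewrite memNset].
pose E := [set w | (eps < `| ((n - nstar X tn n w)%N%:R / Num.sqrt n%:R) : R |)%R].
have EE : E = [set w | eps < `| c w / Num.sqrt n%:R |].
  by apply/seteqP; split => w; rewrite /E /= cE.
have mE : measurable E.
  rewrite EE; apply: mbool; apply: measurable_fun_ltr => //.
  apply: measurableT_comp; first exact: normr_measurable.
  by apply: measurable_funM => //; exact: measurable_cst.
pose S1 := setT `&` [set w | (((u ^+ 4)^-1 ^+ 4)%:E <= `| (D w ^+ 4)%:E |)%E].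
pose S2 := setT `&` [set w | ((eps * u ^+ 5)%:E <= `| (Nf w)%:E |)%E].
have mS1 : measurable S1.
  apply: emeasurable_fun_c_infty => //.
  apply: measurableT_comp; first exact: abse_measurable.
  apply: measurableT_comp; first exact: EFin_measurable.
  exact: measurable_funX.
have mS2 : measurable S2.
  apply: emeasurable_fun_c_infty => //.
  apply: measurableT_comp; first exact: abse_measurable.
  by apply: measurableT_comp; first exact: EFin_measurable.
have D0 w : 0 <= D w by rewrite /D /eucl_dist sqrtr_ge0.
have d0 : 0 < (u ^+ 4)^-1 by rewrite invr_gt0 exprn_gt0.
have sub : E `<=` S1 `|` S2.
  rewrite EE => w /= Hw.
  have [h1|h1] := leP ((u ^+ 4)^-1 ^+ 4) (D w ^+ 4).
    by left; split => //=; rewrite lee_fin ger0_norm // exprn_ge0.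
  right; split => //=; rewrite lee_fin.
  have hD : D w <= (u ^+ 4)^-1.
    rewrite leNgt; apply/negP => lt.
    move: h1; rewrite ltNge => /negP; apply; apply: ltW.
    by rewrite ltrXn2r // ltW.
  have c0 : 0 <= c w by apply: sumr_ge0 => i _; rewrite indicE ler0n.
  rewrite sqn ger0_norm ?divr_ge0 ?exprn_ge0 // ?ltW // in Hw.
  rewrite ltr_pdivlMr ?exprn_gt0 // in Hw.
  have cle : c w <= Nf w.
    apply: ler_sum => i _; rewrite !indicE.
    case: (boolP (w \in [set w | X i w = tn w])) => [/set_mem/= Ei|_]; last first.
      by rewrite ler0n.
    rewrite mem_set //; split => //=.
    rewrite /g Ei -/(D w) /inv_pow32.
    case: ifP => [_ /=|/negbT Dn0]; first by rewrite leey.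
    rewrite abse_EFin lee_fin ger0_norm ?powR_ge0 //.
    by apply: pow32_bound => //; rewrite lt_neqAle eq_sym Dn0 D0.
  have N0 : 0 <= Nf w by apply: sumr_ge0 => i _; rewrite indicE ler0n.
  by rewrite ger0_norm //; lra.
have b1 : (((u ^+ 4)^-1 ^+ 4)%:E * P S1 <= (C / n%:R ^+ 2)%:E)%E.
  apply: le_trans (le_integral_abse P measurableT
     (g := fun w => (D w ^+ 4)%:E) _ _) _.
  - apply: measurableT_comp; first exact: EFin_measurable.
    exact: measurable_funX.
  - by rewrite exprn_gt0.
  rewrite (eq_integral (fun w => (D w ^+ 4)%:E)) //.
  by move=> w _ /=; rewrite ger0_norm // exprn_ge0.
have b3 : ((u ^+ 6)%:E * F G <= K%:E)%E.
  apply: le_trans (le_integral_abse F measurableT (g := g) mg _) _.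
    by rewrite exprn_gt0.
  rewrite (eq_integral g); first by rewrite hK.
  move=> x _; rewrite gee0_abs //; exact: inv_pow32_ge0.
have b2 : ((eps * u ^+ 5)%:E * P S2 <= \sum_(i < n) F G)%E.
  apply: le_trans (le_integral_abse P measurableT
     (g := fun w => (Nf w)%:E) _ _) _.
  - by apply: measurableT_comp; first exact: EFin_measurable.
  - by rewrite mulr_gt0 // exprn_gt0.
  rewrite (eq_integral (fun w => \sum_(i < n) (\1_(X i @^-1` G) w)%:E)%E); last first.
    move=> w _ /=; rewrite ger0_norm ?sumEFin //.
    by apply: sumr_ge0 => i _; rewrite indicE ler0n.
  have mi (i : 'I_n) : measurable_fun setT (fun w => (\1_(X i @^-1` G) w)%:E : \bar R).
    apply: measurableT_comp; first exact: EFin_measurable.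
    exact: measurable_indic.
  have pi (i : 'I_n) w : setT w -> (0 <= (\1_(X i @^-1` G) w)%:E :> \bar R)%E.
    by move=> _; rewrite lee_fin indicE ler0n.
  rewrite (ge0_integral_sum _ measurableT mi pi).
  by apply: lee_sum => i _; rewrite integral_indic // setIT -(hdist i G mG).
have uu : u != 0 by rewrite gt_eqF.
have mU : measurable (S1 `|` S2) by exact: measurableU.
have hle := le_measure P (mem_set mE) (mem_set mU) sub.
apply: le_trans hle _.
have hU : (P (S1 `|` S2) <= P S1 + P S2)%E := measureU2 P mS1 mS2.
apply: le_trans hU _.
rewrite (probE P mS1) (probE P mS2) (probE F mG) in b1 b2 b3 *.
rewrite sumEFin sumr_const card_ord -mulr_natl -u10 in b2.
rewrite -EFinM lee_fin in b1; rewrite -EFinM lee_fin in b2; rewrite -EFinM lee_fin in b3.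
rewrite -u10 in b1.
rewrite (probE P mS1) (probE P mS2) -EFinD lee_fin.
set a1 := fine (P S1) in b1 *; set a2 := fine (P S2) in b2 *; set aG := fine (F G) in b2 b3 *.
have h1 : a1 <= C / u ^+ 4.
  rewrite ler_pdivlMr ?exprn_gt0 //.
  have -> : a1 * u ^+ 4 = ((u ^+ 4)^-1 ^+ 4 * a1) * (u ^+ 10) ^+ 2 by field.
  have -> : C = C / (u ^+ 10) ^+ 2 * (u ^+ 10) ^+ 2 by field.
  by apply: ler_wpM2r => //; rewrite exprn_ge0 // exprn_ge0 // ltW.
have h2 : a2 <= K / (eps * u).
  rewrite ler_pdivlMr ?mulr_gt0 //.
  have -> : a2 * (eps * u) = (eps * u ^+ 5 * a2) * (u ^+ 4)^-1 by field.
  apply: le_trans (ler_wpM2r (ltW d0) b2) _.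
  by have -> : u ^+ 10 * aG * (u ^+ 4)^-1 = u ^+ 6 * aG by field.
exact: lerD.
Qed.

Lemma vlim (R : realType) (M : R) :
  (fun n : nat => M / n%:R `^ (10^-1)) @ \oo --> (0 : R).
Proof.
apply/cvgr0Pnorm_lt => e e0.
set r := `|M| / e + 1.
have r0 : 0 < r by rewrite /r ltr_pwDr // divr_ge0 // ltW.
near=> n.
have hn : r ^+ 10 <= n%:R by near: n; exact: nbhs_infty_ger.
set u := n%:R `^ (10^-1).
have u10 : u ^+ 10 = n%:R.
  by rewrite /u -powR_mulrn ?powR_ge0// -powRrM mulVf ?powRr1 ?ler0n.
have ur : r <= u.
  rewrite leNgt; apply/negP => lt.
  have : u ^+ 10 < r ^+ 10 by rewrite ltrXn2r // powR_ge0.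
  by rewrite u10 ltNge hn.
have u0 : 0 < u by apply: lt_le_trans ur.
rewrite normrM normfV (ger0_norm (ltW u0)) ltr_pdivrMr //.
apply: lt_le_trans (_ : e * r <= e * u); last by rewrite ler_pM2l.
rewrite /r mulrDr mulrCA mulfV ?gt_eqF // mulr1 ltrDl mulr1 //.
Unshelve. all: end_near.
Qed.

Lemma bound_le (R : realType) (C K eps u : R) : 0 < eps -> 1 <= u -> 0 <= K ->
  C / u ^+ 4 + K / (eps * u) <= (`|C| + K / eps) / u.
Proof.
move=> e0 u1 K0.
have u0 : 0 < u by apply: lt_le_trans u1.
have -> : K / (eps * u) = (K / eps) / u by field; rewrite ?gt_eqF.
rewrite mulrDl lerD2r.
apply: le_trans (_ : `|C| / u ^+ 4 <= _).
  by apply: ler_wpM2r; [rewrite invr_ge0 exprn_ge0 // ltW|exact: ler_norm].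
apply: ler_wpM2l => //.
rewrite lef_pV2 ?posrE ?exprn_gt0 //.
have : 1 <= u ^+ 3 by rewrite exprn_ege1.
by move=> h; rewrite exprS; nra.
Qed.

Unset Implicit Arguments.
Theorem lemma1 (d : measure_display) (T : measurableType d) (R : realType)
  (P : probability T R) (p : nat) (hp : (2 <= p)%N)
  (F : probability (p.-tuple R) R)
  (X : nat -> {RV P >-> p.-tuple R})
  (t : p.-tuple R) (tn : nat -> {RV P >-> p.-tuple R})
  (hind : mutually_independent P (fun i => (X i : T -> p.-tuple R)))
  (hdist : forall i (A : set (p.-tuple R)), measurable A ->
     P (X i @^-1` A) = F A)
  (hmom : exists C : R, \forall n \near \oo,
     (\int[P]_w ((eucl_dist (tn n w) t) ^+ 4)%:E <= (C / (n%:R ^+ 2))%:E)%E)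
  (hneg : (\int[F]_x inv_pow32 (eucl_dist x t) < +oo)%E) :
  forall eps : R, 0 < eps ->
    (fun n : nat => P [set w | eps <
        `| ((n - nstar (fun i => (X i : T -> p.-tuple R)) (tn n) n w)%N%:R
            / Num.sqrt n%:R) : R |]) @ \oo --> 0%E.
Proof.
move=> eps eps0.
have [C hC] := hmom.
set I := (\int[F]_x inv_pow32 (eucl_dist x t))%E in hneg.
have I0 : (0 <= I)%E by apply: integral_ge0 => x _; exact: inv_pow32_ge0.
have hK : I = (fine I)%:E by rewrite fineK // ge0_fin_numE.
set K := fine I in hK.
have K0 : 0 <= K by rewrite /K fine_ge0.
pose M := `|C| + K / eps.
apply: (@squeeze_cvge _ _ _ _ (cst 0%E) _ (fun n => (M / n%:R `^ (10^-1))%:E)).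
- near=> n; apply/andP; split; first exact: measure_ge0.
  have n0 : (0 < n)%N by near: n; exact: nbhs_infty_gt.
  have hCn : (\int[P]_w ((eucl_dist (tn n w) t) ^+ 4)%:E <= (C / (n%:R ^+ 2))%:E)%E.
    by near: n; exact: hC.
  apply: le_trans (key (P:=P) (F:=F) (X := fun i => (X i : T -> p.-tuple R))
    (fun i => measurable_funPT (X i)) (measurable_funPT (tn n)) hdist n0 eps0 hCn hK) _.
  rewrite lee_fin; apply: bound_le => //.
  set u := n%:R `^ (10^-1).
  have u10 : u ^+ 10 = n%:R.
    by rewrite /u -powR_mulrn ?powR_ge0// -powRrM mulVf ?powRr1 ?ler0n.
  rewrite leNgt; apply/negP => lt.
  have : u ^+ 10 < 1 ^+ 10 by rewrite ltrXn2r // powR_ge0.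
  rewrite u10 expr1n => h.
  have : (n%:R : R) < 1%:R by [].
  by rewrite ltr_nat ltnNge n0.
- by apply: cvg_near_cst; exact: nearW.
- apply: cvg_EFin; first exact: nearW.
  exact: vlim.
Unshelve. all: end_near.
Qed.
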